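(* Let $f_j,g_i:\mathbb{R}^n\to\mathbb{R}$ ($j=1,\dots,m$, $i=1,\dots,p$) be continuously differentiable, let $x\in\mathbb{R}^n$, and let $(t,d)$ be the solution of $QP(x)$. Then: (I) $t\le \Phi(x)-\frac12 d^Td$. (II) If $d=0$ and MFCQ holds at $x$, then $x$ is a strongly critical point of the MOP. (III) If $d\neq 0$, then there is $\bar\sigma>0$ such that for every $\sigma\ge\bar\sigma$ and every $j\in\{1,\dots,m\}$ one has $\theta_{j,\sigma}(x;d)<0$, and $d$ is a descent direction of $\Psi_{j,\sigma}$ at $x$ (i.e. there is $\bar\alpha>0$ with $\Psi_{j,\sigma}(x+\alpha d)<\Psi_{j,\sigma}(x)$ for all $\alpha\in(0,\bar\alpha]$).
   Context: The MOP is: minimize $(f_1(x),\dots,f_m(x))$ subject to $g_i(x)\le 0$, $i=1,\dots,p$, with feasible set $X=\{x: g_i(x)\le 0\ \forall i\}$. $\Phi(x)=\max\{0,g_1(x),\dots,g_p(x)\}$; $I(x)=\{i\in\{1,\dots,p\}: g_i(x)=\Phi(x)\}$. $\Phi^*(x;d)=\max\{\max_{i\in I(x)}(g_i(x)+\nabla g_i(x)^Td),\,0\}-\Phi(x)$ (the inner max over an empty set is omitted). For $\sigma>0$: $\Psi_{j,\sigma}(x)=f_j(x)+\sigma\Phi(x)$ and $\theta_{j,\sigma}(x;d)=\nabla f_j(x)^Td+\sigma\Phi^*(x;d)$. $QP(x)$: minimize over $(t,d)\in\mathbb{R}\times\mathbb{R}^n$ the quantity $t+\frac12 d^Td$ subject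 to $\nabla f_j(x)^Td\le t$ ($j=1,\dots,m$) and $g_i(x)+\nabla g_i(x)^Td\le t$ ($i=1,\dots,p$); it has a unique solution. MFCQ holds at $x$ if there is $z\in\mathbb{R}^n$ with $\nabla g_i(x)^Tz<0$ for all $i\in I(x)$. A point $x\in X$ is a strongly critical point of the MOP if there exist $\lambda\in\mathbb{R}^m_+\setminus\{0\}$ and $\mu\in\mathbb{R}^p_+$ with $\sum_j\lambda_j\nabla f_j(x)+\sum_i\mu_i\nabla g_i(x)=0$ and $\mu_ig_i(x)=0$ for all $i$. *)

(* Defs.v *)
From Stdlib Require Import Reals Lra Lia.
From Stdlib Require Vectors.Fin.
Open Scope R_scope.

Definition vec (n : nat) : Type := Fin.t n -> R.

Fixpoint vsum (n : nat) : (Fin.t n -> R) -> R :=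
  match n return (Fin.t n -> R) -> R with
  | O => fun _ => 0
  | S k => fun v => v Fin.F1 + vsum k (fun i => v (Fin.FS i))
  end.

Fixpoint vmax0 (n : nat) : (Fin.t n -> R) -> R :=
  match n return (Fin.t n -> R) -> R with
  | O => fun _ => 0
  | S k => fun v => Rmax (v Fin.F1) (vmax0 k (fun i => v (Fin.FS i)))
  end.

Definition dot {n : nat} (u v : vec n) : R := vsum n (fun i => u i * v i).
Definition vadd {n : nat} (u v : vec n) : vec n := fun i => u i + v i.
Definition vsub {n : nat} (u v : vec n) : vec n := fun i => u i - v i.
Definition vscal {n : nat} (a : R) (u : vec n) : vec n := fun i => a * u i.
Definition vzero (n : nat) : vec n := fun _ => 0.
Definition vnorm {n : nat} (u : vec n) : R := sqrt (dot u u).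

Definition has_gradient {n : nat} (f : vec n -> R) (x gr : vec n) : Prop :=
  forall eps : R, 0 < eps -> exists delta : R, 0 < delta /\
    forall h : vec n, vnorm h < delta ->
      Rabs (f (vadd x h) - f x - dot gr h) <= eps * vnorm h.

Definition is_C1 {n : nat} (f : vec n -> R) (df : vec n -> vec n) : Prop :=
  (forall x, has_gradient f x (df x)) /\
  (forall x eps, 0 < eps -> exists delta, 0 < delta /\
     forall y, vnorm (vsub y x) < delta -> vnorm (vsub (df y) (df x)) < eps).

Definition Phi {n p : nat} (g : Fin.t p -> vec n -> R) (x : vec n) : R :=
  vmax0 p (fun i => g i x).

(* Phi*(x;d) = max{ max_{i in I(x)} (g_i(x) + grad g_i(x)^T d), 0 } - Phi(x),
   where I(x) = { i : g_i(x) = Phi(x) }.  Indices outside I(x) contribute 0,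
   which does not change the outer max with 0 (empty inner max omitted). *)
Definition PhiStar {n p : nat} (g : Fin.t p -> vec n -> R)
  (dg : Fin.t p -> vec n -> vec n) (x d : vec n) : R :=
  vmax0 p (fun i => if Req_EM_T (g i x) (Phi g x)
                    then g i x + dot (dg i x) d else 0) - Phi g x.

Definition Psi {n p : nat} (fj : vec n -> R) (g : Fin.t p -> vec n -> R)
  (sigma : R) (x : vec n) : R := fj x + sigma * Phi g x.

Definition theta {n p : nat} (dfj : vec n -> vec n) (g : Fin.t p -> vec n -> R)
  (dg : Fin.t p -> vec n -> vec n) (sigma : R) (x d : vec n) : R :=
  dot (dfj x) d + sigma * PhiStar g dg x d.

Definition QP_feasible {n m p : nat} (df : Fin.t m -> vec n -> vec n)
  (g : Fin.t p -> vec n -> R) (dg : Fin.t p -> vec n -> vec n)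
  (x : vec n) (t : R) (d : vec n) : Prop :=
  (forall j, dot (df j x) d <= t) /\
  (forall i, g i x + dot (dg i x) d <= t).

Definition QP_solution {n m p : nat} (df : Fin.t m -> vec n -> vec n)
  (g : Fin.t p -> vec n -> R) (dg : Fin.t p -> vec n -> vec n)
  (x : vec n) (t : R) (d : vec n) : Prop :=
  QP_feasible df g dg x t d /\
  forall t' d', QP_feasible df g dg x t' d' ->
    t + / 2 * dot d d <= t' + / 2 * dot d' d'.

Definition MFCQ {n p : nat} (g : Fin.t p -> vec n -> R)
  (dg : Fin.t p -> vec n -> vec n) (x : vec n) : Prop :=
  exists z : vec n, forall i, g i x = Phi g x -> dot (dg i x) z < 0.

Definition feasible {n p : nat} (g : Fin.t p -> vec n -> R) (x : vec n) : Prop :=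
  forall i, g i x <= 0.

Definition strongly_critical {n m p : nat} (df : Fin.t m -> vec n -> vec n)
  (g : Fin.t p -> vec n -> R) (dg : Fin.t p -> vec n -> vec n) (x : vec n) : Prop :=
  feasible g x /\
  exists (lam : Fin.t m -> R) (mu : Fin.t p -> R),
    (forall j, 0 <= lam j) /\ (exists j, lam j <> 0) /\
    (forall i, 0 <= mu i) /\
    (forall k : Fin.t n,
       vsum m (fun j => lam j * df j x k) + vsum p (fun i => mu i * dg i x k) = 0) /\
    (forall i, mu i * g i x = 0).

(* Main.v *)
Require Import Defs.
From Stdlib Require Import Reals Lra Lia List Classical FunctionalExtensionality.
From Stdlib Require Vectors.Fin.
Import ListNotations.
Open Scope R_scope.

Lemma fin_S_cases n (P : Fin.t (S n) -> Prop) :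
  P Fin.F1 -> (forall i, P (Fin.FS i)) -> forall i, P i.
Proof. intros H1 H2 i. apply (Fin.caseS' i P); auto. Qed.

Lemma vsum_ext n (f g : Fin.t n -> R) : (forall i, f i = g i) -> vsum n f = vsum n g.
Proof.
  revert f g; induction n; intros f g H; cbn [vsum]; [reflexivity|].
  rewrite (H Fin.F1). f_equal. apply IHn. intro; apply H.
Qed.

Lemma vsum_add n (f g : Fin.t n -> R) : vsum n (fun i => f i + g i) = vsum n f + vsum n g.
Proof. revert f g; induction n; intros f g; cbn [vsum]; [ring|]. rewrite IHn; ring. Qed.

Lemma vsum_scal n a (f : Fin.t n -> R) : vsum n (fun i => a * f i) = a * vsum n f.
Proof. revert f; induction n; intros f; cbn [vsum]; [ring|]. rewrite IHn; ring. Qed.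

Lemma vsum_zero n : vsum n (fun _ => 0) = 0.
Proof. induction n; cbn [vsum]; [ring|]. rewrite IHn; ring. Qed.

Lemma vsum_le n (f g : Fin.t n -> R) : (forall i, f i <= g i) -> vsum n f <= vsum n g.
Proof.
  revert f g; induction n; intros f g H; cbn [vsum]; [lra|].
  specialize (IHn (fun i => f (Fin.FS i)) (fun i => g (Fin.FS i)) (fun i => H (Fin.FS i))).
  specialize (H Fin.F1). lra.
Qed.

Lemma vsum_swap n p (F : Fin.t p -> Fin.t n -> R) :
  vsum n (fun k => vsum p (fun i => F i k)) = vsum p (fun i => vsum n (fun k => F i k)).
Proof.
  revert F; induction n; intros F; cbn [vsum].
  - rewrite vsum_zero. reflexivity.
  - rewrite IHn. rewrite <- vsum_add. reflexivity.
Qed.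

Lemma vsum_ind n (F : Fin.t n -> R) k :
  vsum n (fun j => if Fin.eq_dec j k then F j else 0) = F k.
Proof.
  revert F k; induction n; intros F k; [inversion k|].
  revert k; apply fin_S_cases; cbn [vsum].
  - destruct (Fin.eq_dec Fin.F1 Fin.F1) as [_|C]; [|congruence].
    rewrite (vsum_ext _ _ (fun _ => 0)); [rewrite vsum_zero; ring|].
    intro i; destruct (Fin.eq_dec (Fin.FS i) Fin.F1) as [E|_]; [inversion E|reflexivity].
  - intro k. destruct (Fin.eq_dec Fin.F1 (Fin.FS k)) as [E|_]; [inversion E|].
    rewrite (vsum_ext _ _ (fun j => if Fin.eq_dec j k then F (Fin.FS j) else 0)).
    + rewrite IHn; ring.
    + intro i. destruct (Fin.eq_dec (Fin.FS i) (Fin.FS k)) as [E|E];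
      destruct (Fin.eq_dec i k) as [E'|E']; subst; auto.
      * apply Fin.FS_inj in E; congruence.
      * congruence.
Qed.

Lemma vsum_pos_ex n (f : Fin.t n -> R) : 0 < vsum n f -> exists i, 0 < f i.
Proof.
  intro H. apply NNPP; intro Hn.
  assert (vsum n f <= vsum n (fun _ => 0)).
  { apply vsum_le. intro i. apply Rnot_lt_le. intro; apply Hn; eauto. }
  rewrite vsum_zero in H0. lra.
Qed.

Lemma vsum_neg_strict n (f : Fin.t n -> R) i0 :
  (forall i, f i <= 0) -> f i0 < 0 -> vsum n f < 0.
Proof.
  revert f i0; induction n; intros f i0 H H0; [inversion i0|].
  cbn [vsum]. revert H0; pattern i0; revert i0; apply fin_S_cases; cbv beta.
  - intro. assert (vsum n (fun i => f (Fin.FS i)) <= vsum n (fun _ => 0))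
      by (apply vsum_le; auto). rewrite vsum_zero in H1. lra.
  - intros i Hi. specialize (IHn (fun i => f (Fin.FS i)) i (fun j => H (Fin.FS j)) Hi).
    specialize (H Fin.F1). lra.
Qed.

Lemma dot_add_l n (u w v : vec n) : dot (vadd u w) v = dot u v + dot w v.
Proof. unfold dot, vadd. rewrite <- vsum_add. apply vsum_ext; intro; ring. Qed.
Lemma dot_scal_l n a (u v : vec n) : dot (vscal a u) v = a * dot u v.
Proof. unfold dot, vscal. rewrite <- vsum_scal. apply vsum_ext; intro; ring. Qed.
Lemma dot_scal_r n a (u v : vec n) : dot u (vscal a v) = a * dot u v.
Proof. unfold dot, vscal. rewrite <- vsum_scal. apply vsum_ext; intro; ring. Qed.
Lemma dot_zero_r n (u : vec n) : dot u (vzero n) = 0.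
Proof. unfold dot, vzero. transitivity (vsum n (fun _ => 0)); [apply vsum_ext; intro; ring| apply vsum_zero]. Qed.
Lemma dot_nonneg n (u : vec n) : 0 <= dot u u.
Proof.
  unfold dot. apply Rle_trans with (vsum n (fun _ => 0)); [rewrite vsum_zero; lra|]. apply vsum_le; intro. apply Rle_0_sqr.
Qed.

Definition tl {n} (c : vec (S n)) : vec n := fun i => c (Fin.FS i).
Definition vcons {n} (a : R) (w : vec n) : vec (S n) :=
  fun i => Fin.caseS' i (fun _ => R) a w.

Lemma dot_S n (u v : vec (S n)) : dot u v = u Fin.F1 * v Fin.F1 + dot (tl u) (tl v).
Proof. reflexivity. Qed.

Lemma dot_self_zero n (u : vec n) : dot u u = 0 -> forall i, u i = 0.
Proof.
  revert u; induction n; intros u H i; [inversion i|].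
  rewrite dot_S in H. pose proof (dot_nonneg _ (tl u)).
  assert (u Fin.F1 * u Fin.F1 = 0) by nra.
  revert i; apply fin_S_cases.
  - nra.
  - intro i. apply (IHn (tl u)). lra.
Qed.

Lemma dot_self_pos n (u : vec n) : u <> vzero n -> 0 < dot u u.
Proof.
  intro H. destruct (dot_nonneg _ u) as [|E]; auto.
  exfalso; apply H. apply functional_extensionality. intro i.
  apply dot_self_zero. auto.
Qed.

Lemma vmax0_ge0 n (v : Fin.t n -> R) : 0 <= vmax0 n v.
Proof. revert v; induction n; intro v; cbn [vmax0]; [lra|].
  eapply Rle_trans; [apply (IHn (fun i => v (Fin.FS i)))|apply Rmax_r]. Qed.

Lemma vmax0_ge n (v : Fin.t n -> R) i : v i <= vmax0 n v.
Proof.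
  revert v i; induction n; intros v i; [inversion i|]. cbn [vmax0].
  revert i; apply fin_S_cases.
  - apply Rmax_l.
  - intro i. eapply Rle_trans; [apply (IHn (fun j => v (Fin.FS j)))|apply Rmax_r].
Qed.

Lemma vmax0_le n (v : Fin.t n -> R) U : (forall i, v i <= U) -> 0 <= U -> vmax0 n v <= U.
Proof.
  revert v; induction n; intros v H H0; cbn [vmax0]; [auto|].
  apply Rmax_lub; auto.
Qed.

Ltac vext := apply functional_extensionality; intro.

Inductive cone {n} (L : list (vec n)) : vec n -> R -> Prop :=
| cone0 : cone L (vzero n) 0
| coneS : forall c a w s, In c L -> 0 <= a -> cone L w s ->
    cone L (vadd w (vscal a c)) (s + a).

Lemma cone_s_nonneg n (L : list (vec n)) w s : cone L w s -> 0 <= s.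
Proof. induction 1; lra. Qed.

Lemma cone_add n (L : list (vec n)) w1 s1 w2 s2 :
  cone L w1 s1 -> cone L w2 s2 -> cone L (vadd w1 w2) (s1 + s2).
Proof.
  intros H1 H2. induction H2.
  - replace (vadd w1 (vzero n)) with w1 by (vext; unfold vadd, vzero; ring).
    replace (s1 + 0) with s1 by ring. exact H1.
  - replace (vadd w1 (vadd w (vscal a c))) with (vadd (vadd w1 w) (vscal a c))
      by (vext; unfold vadd; ring).
    replace (s1 + (s + a)) with ((s1 + s) + a) by ring.
    apply coneS; auto.
Qed.

Lemma cone_scale n (L : list (vec n)) b w s :
  0 <= b -> cone L w s -> cone L (vscal b w) (b * s).
Proof.
  intros Hb H. induction H.
  - replace (vscal b (vzero n)) with (vzero n) by (vext; unfold vscal, vzero; ring).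
    replace (b * 0) with 0 by ring. constructor.
  - replace (vscal b (vadd w (vscal a c))) with (vadd (vscal b w) (vscal (b*a) c))
      by (vext; unfold vscal, vadd; ring).
    replace (b * (s + a)) with (b * s + b * a) by ring.
    apply coneS; auto. apply Rmult_le_pos; auto.
Qed.

Lemma vcons_zero n : vcons 0 (vzero n) = vzero (S n).
Proof. vext. pattern x; revert x; apply fin_S_cases; reflexivity. Qed.

Lemma cone_transfer n (L : list (vec (S n))) (L' : list (vec n)) :
  (forall c', In c' L' -> exists s', 0 < s' /\ cone L (vcons 0 c') s') ->
  forall w s, cone L' w s ->
  exists s2, 0 <= s2 /\ (0 < s -> 0 < s2) /\ cone L (vcons 0 w) s2.
Proof.
  intros HL w s H. induction H.
  - exists 0. rewrite vcons_zero. repeat split; try lra. constructor.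
  - destruct IHcone as [s2 [Hs2 [Hs2' Hc]]].
    destruct (HL c H) as [s' [Hs' Hc']].
    exists (s2 + a * s'). pose proof (cone_s_nonneg _ _ _ _ H1).
    split; [nra|split].
    + intro Hp. destruct (Rle_lt_or_eq_dec 0 s H2) as [Hlt|Heq].
      * specialize (Hs2' Hlt). nra.
      * subst. assert (0 < a) by lra. nra.
    + replace (vcons 0 (vadd w (vscal a c))) with (vadd (vcons 0 w) (vscal a (vcons 0 c))).
      * apply cone_add; auto. apply cone_scale; auto.
      * vext. pattern x; revert x; apply fin_S_cases; cbv beta.
        -- unfold vadd, vscal, vcons; simpl. ring.
        -- intro i. unfold vadd, vscal, vcons; simpl. ring.
Qed.

Definition posb {n} (c : vec (S n)) : bool := if Rlt_dec 0 (c Fin.F1) then true else false.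
Definition negb' {n} (c : vec (S n)) : bool := if Rlt_dec (c Fin.F1) 0 then true else false.
Definition zerob {n} (c : vec (S n)) : bool := if Req_EM_T (c Fin.F1) 0 then true else false.
Definition pairv {n} (p q : vec (S n)) : vec n :=
  fun i => p Fin.F1 * q (Fin.FS i) - q Fin.F1 * p (Fin.FS i).
Definition newfam {n} (L : list (vec (S n))) : list (vec n) :=
  map tl (filter zerob L) ++
  flat_map (fun p => map (pairv p) (filter negb' L)) (filter posb L).

Lemma posb_true n (c : vec (S n)) : posb c = true <-> 0 < c Fin.F1.
Proof. unfold posb; destruct Rlt_dec; split; intro; auto; discriminate. Qed.
Lemma negb_true n (c : vec (S n)) : negb' c = true <-> c Fin.F1 < 0.
Proof. unfold negb'; destruct Rlt_dec; split; intro; auto; discriminate. Qed.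
Lemma zerob_true n (c : vec (S n)) : zerob c = true <-> c Fin.F1 = 0.
Proof. unfold zerob; destruct Req_EM_T; split; intro; auto; try discriminate; contradiction. Qed.

Lemma newfam_tl n (L : list (vec (S n))) c : In c L -> c Fin.F1 = 0 -> In (tl c) (newfam L).
Proof.
  intros H H0. unfold newfam. apply in_or_app. left. apply in_map.
  apply filter_In. split; auto. apply zerob_true; auto.
Qed.

Lemma newfam_pair n (L : list (vec (S n))) p q : In p L -> 0 < p Fin.F1 ->
  In q L -> q Fin.F1 < 0 -> In (pairv p q) (newfam L).
Proof.
  intros. unfold newfam. apply in_or_app. right. apply in_flat_map.
  exists p. split.
  - apply filter_In; split; auto. apply posb_true; auto.
  - apply in_map. apply filter_In; split; auto. apply negb_true; auto.
Qed.

Lemma newfam_inv n (L : list (vec (S n))) c' : In c' (newfam L) ->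
  (exists c, In c L /\ c Fin.F1 = 0 /\ c' = tl c) \/
  (exists p q, In p L /\ 0 < p Fin.F1 /\ In q L /\ q Fin.F1 < 0 /\ c' = pairv p q).
Proof.
  unfold newfam. intro H. apply in_app_or in H as [H|H].
  - left. apply in_map_iff in H as [c [E Hc]]. apply filter_In in Hc as [Hc Hz].
    apply zerob_true in Hz. eauto.
  - right. apply in_flat_map in H as [p [Hp Hq]]. apply in_map_iff in Hq as [q [E Hq]].
    apply filter_In in Hp as [Hp Hp']. apply filter_In in Hq as [Hq Hq'].
    apply posb_true in Hp'. apply negb_true in Hq'. exists p, q; auto 10.
Qed.

Lemma argmax (T : Type) (l : list T) (f : T -> R) : l <> [] ->
  exists a, In a l /\ forall b, In b l -> f b <= f a.
Proof.
  induction l as [|a l IH]; intro H; [congruence|].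
  destruct l as [|a' l'].
  - exists a. split; [left; auto|]. intros b [E|[]]; subst; lra.
  - destruct IH as [m [Hm Hm']]; [discriminate|].
    destruct (Rle_dec (f a) (f m)).
    + exists m. split; [right; auto|]. intros b [E|Hb]; subst; auto.
    + exists a. split; [left; auto|]. intros b [E|Hb]; subst; [lra|].
      specialize (Hm' b Hb). lra.
Qed.

Lemma sep (T : Type) (A B : list T) (k : T -> R) :
  (forall a b, In a A -> In b B -> k b < k a) ->
  exists v0, (forall a, In a A -> v0 < k a) /\ (forall b, In b B -> k b < v0).
Proof.
  intro H.
  destruct A as [|a0 A]; destruct B as [|b0 B].
  - exists 0. split; intros _ [].
  - destruct (argmax _ (b0 :: B) k) as [bm [Hbm Hbm']]; [discriminate|].
    exists (k bm + 1). split; [intros _ []|]. intros b Hb. specialize (Hbm' b Hb). lra.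
  - destruct (argmax _ (a0 :: A) (fun a => - k a)) as [am [Ham Ham']]; [discriminate|].
    exists (k am - 1). split; [|intros _ []]. intros a Ha. specialize (Ham' a Ha). simpl in Ham'. lra.
  - destruct (argmax _ (b0 :: B) k) as [bm [Hbm Hbm']]; [discriminate|].
    destruct (argmax _ (a0 :: A) (fun a => - k a)) as [am [Ham Ham']]; [discriminate|].
    pose proof (H am bm Ham Hbm).
    exists ((k bm + k am) / 2). split.
    + intros a Ha. specialize (Ham' a Ha). simpl in Ham'. lra.
    + intros b Hb. specialize (Hbm' b Hb). lra.
Qed.

Lemma dot_pairv n (p q : vec (S n)) v :
  dot (pairv p q) v = p Fin.F1 * dot (tl q) v - q Fin.F1 * dot (tl p) v.
Proof.
  unfold dot, pairv, tl.
  rewrite (vsum_ext _ _ (fun i => p Fin.F1 * (q (Fin.FS i) * v i) + (- q Fin.F1) * (p (Fin.FS i) * v i)))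
    by (intro; ring).
  rewrite vsum_add, !vsum_scal. ring.
Qed.

Theorem gordan n (L : list (vec n)) :
  (exists v, forall c, In c L -> dot c v < 0) \/ (exists s, 0 < s /\ cone L (vzero n) s).
Proof.
  revert L; induction n; intro L.
  - destruct L as [|c L].
    + left. exists (vzero 0). intros c [].
    + right. exists (0 + 1). split; [lra|].
      replace (vzero 0) with (vadd (vzero 0) (vscal 1 c)).
      * apply coneS; [left; auto|lra|constructor].
      * vext. inversion x.
  - destruct (IHn (newfam L)) as [[v' Hv'] | [s [Hs Hc]]].
    + left.
      set (k := fun c : vec (S n) => - dot (tl c) v' / c Fin.F1).
      destruct (sep _ (filter posb L) (filter negb' L) k) as [v0 [H1 H2]].
      { intros a b Ha Hb. apply filter_In in Ha as [Ha Ha']. apply filter_In in Hb as [Hb Hb'].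
        apply posb_true in Ha'. apply negb_true in Hb'.
        pose proof (Hv' _ (newfam_pair _ _ _ _ Ha Ha' Hb Hb')) as Hd.
        rewrite dot_pairv in Hd.
        assert (Ka : k a * a Fin.F1 = - dot (tl a) v') by (unfold k; field; lra).
        assert (Kb : k b * b Fin.F1 = - dot (tl b) v') by (unfold k; field; lra).
        assert (E : a Fin.F1 * b Fin.F1 * (k a - k b) < 0).
        { replace (a Fin.F1 * b Fin.F1 * (k a - k b)) with
            (a Fin.F1 * (- (k b * b Fin.F1)) - b Fin.F1 * (- (k a * a Fin.F1))) by ring.
          rewrite Ka, Kb. lra. }
        assert (a Fin.F1 * b Fin.F1 < 0) by nra. nra. }
      exists (vcons v0 v'). intros c Hc. rewrite dot_S.
      change (tl (vcons v0 v')) with v'. change (vcons v0 v' Fin.F1) with v0.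
      destruct (Rtotal_order (c Fin.F1) 0) as [Hn|[Hz|Hp]].
      * assert (Hb : In c (filter negb' L)) by (apply filter_In; split; auto; apply negb_true; auto).
        specialize (H2 c Hb).
        assert (Kc : k c * c Fin.F1 = - dot (tl c) v') by (unfold k; field; lra).
        nra.
      * rewrite Hz. specialize (Hv' _ (newfam_tl _ _ _ Hc Hz)). lra.
      * assert (Ha : In c (filter posb L)) by (apply filter_In; split; auto; apply posb_true; auto).
        specialize (H1 c Ha).
        assert (Kc : k c * c Fin.F1 = - dot (tl c) v') by (unfold k; field; lra).
        nra.
    + right.
      destruct (cone_transfer n L (newfam L)) with (w := vzero n) (s := s)
        as [s2 [_ [Hs2 Hc2]]]; auto.
      * intros c' Hc'. apply newfam_inv in Hc' as [[c [Hcc [Hz E]]]|[p [q [Hp [Hp' [Hq [Hq' E]]]]]]].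
        -- exists (0 + 1). split; [lra|]. subst c'.
           replace (vcons 0 (tl c)) with (vadd (vzero (S n)) (vscal 1 c)).
           ++ apply coneS; auto; [lra|constructor].
           ++ vext. pattern x; revert x; apply fin_S_cases; cbv beta.
              ** unfold vadd, vscal, vzero, vcons; simpl. rewrite Hz; ring.
              ** intro i. unfold vadd, vscal, vzero, vcons, tl; simpl. ring.
        -- exists (0 + p Fin.F1 + - q Fin.F1). split; [lra|]. subst c'.
           replace (vcons 0 (pairv p q)) with
             (vadd (vadd (vzero (S n)) (vscal (p Fin.F1) q)) (vscal (- q Fin.F1) p)).
           ++ apply coneS; auto; [lra|]. apply coneS; auto; [lra|constructor].
           ++ vext. pattern x; revert x; apply fin_S_cases; cbv beta.
              ** unfold vadd, vscal, vzero, vcons; simpl. ring.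
              ** intro i. unfold vadd, vscal, vzero, vcons, pairv; simpl. ring.
      * exists s2. split; auto. rewrite <- vcons_zero. auto.
Qed.

Lemma fin_eps m (Q : Fin.t m -> R -> Prop) :
  (forall k, exists e, 0 < e /\ forall e', 0 < e' <= e -> Q k e') ->
  exists e, 0 < e /\ forall k e', 0 < e' <= e -> Q k e'.
Proof.
  revert Q; induction m; intros Q H.
  - exists 1. split; [lra|]. intro k; inversion k.
  - destruct (H Fin.F1) as [e1 [He1 He1']].
    destruct (IHm (fun k => Q (Fin.FS k))) as [e2 [He2 He2']]; [intro; apply H|].
    exists (Rmin e1 e2). split; [apply Rmin_pos; auto|].
    pose proof (Rmin_l e1 e2). pose proof (Rmin_r e1 e2).
    intro k; pattern k; revert k; apply fin_S_cases; cbv beta.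
    + intros e' He'. apply He1'. lra.
    + intros k e' He'. apply He2'. lra.
Qed.

Lemma small_eps A B : 0 <= B -> (A <= 0 \/ 0 < B) ->
  exists e, 0 < e /\ forall e', 0 < e' <= e -> e' * A <= B.
Proof.
  intros HB H. destruct (Rle_dec A 0).
  - exists 1. split; [lra|]. intros. nra.
  - destruct H as [H|H]; [lra|].
    exists (B / A). split; [apply Rdiv_lt_0_compat; lra|].
    intros e' He'. assert (B / A * A = B) by (field; lra). nra.
Qed.

Fixpoint fin_list (m : nat) : list (Fin.t m) :=
  match m with O => [] | S k => Fin.F1 :: map Fin.FS (fin_list k) end.

Lemma fin_list_In m (j : Fin.t m) : In j (fin_list m).
Proof.
  induction m; [inversion j|]. pattern j; revert j; apply fin_S_cases; cbv beta; simpl.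
  - left; auto.
  - intro; right; apply in_map; auto.
Qed.

Lemma cone_to_mult n m p (A : Fin.t m -> vec n) (Bv : Fin.t p -> vec n)
  (act : Fin.t p -> Prop) (L : list (vec n))
  (HL : forall c, In c L -> (exists j, c = A j) \/ (exists i, act i /\ c = Bv i)) w s :
  cone L w s -> exists lam mu, (forall j, 0 <= lam j) /\ (forall i, 0 <= mu i) /\
    (forall i, mu i <> 0 -> act i) /\
    (forall k, w k = vsum m (fun j => lam j * A j k) + vsum p (fun i => mu i * Bv i k)) /\
    s = vsum m lam + vsum p mu.
Proof.
  induction 1.
  - exists (fun _ => 0), (fun _ => 0). repeat split; try (intros; lra).
    + intros k. unfold vzero.
      rewrite (vsum_ext _ _ (fun _ => 0)) by (intro; ring).
      rewrite (vsum_ext _ (fun i => 0 * Bv i k) (fun _ => 0)) by (intro; ring).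
      rewrite !vsum_zero. ring.
    + rewrite !vsum_zero. ring.
  - destruct IHcone as [lam [mu [Hl [Hm [Ha [Hw Hs]]]]]].
    destruct (HL c H) as [[j0 E]|[i0 [Hi0 E]]]; subst c.
    + exists (fun j => lam j + if Fin.eq_dec j j0 then a else 0), mu.
      repeat split; auto.
      * intro j; destruct Fin.eq_dec; specialize (Hl j); lra.
      * intro k. unfold vadd, vscal. rewrite Hw.
        rewrite (vsum_ext _ (fun j => (lam j + (if Fin.eq_dec j j0 then a else 0)) * A j k)
          (fun j => lam j * A j k + (if Fin.eq_dec j j0 then a * A j k else 0)))
          by (intro j; destruct Fin.eq_dec; ring).
        rewrite vsum_add, (vsum_ind _ (fun j => a * A j k)). ring.
      * rewrite vsum_add, (vsum_ind _ (fun _ => a)). rewrite Hs. ring.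
    + exists lam, (fun i => mu i + if Fin.eq_dec i i0 then a else 0).
      repeat split; auto.
      * intro i; destruct Fin.eq_dec; specialize (Hm i); lra.
      * intros i Hi. destruct Fin.eq_dec; [subst; auto|]. apply Ha. lra.
      * intro k. unfold vadd, vscal. rewrite Hw.
        rewrite (vsum_ext _ (fun i => (mu i + (if Fin.eq_dec i i0 then a else 0)) * Bv i k)
          (fun i => mu i * Bv i k + (if Fin.eq_dec i i0 then a * Bv i k else 0)))
          by (intro i; destruct Fin.eq_dec; ring).
        rewrite vsum_add, (vsum_ind _ (fun i => a * Bv i k)). ring.
      * rewrite vsum_add, (vsum_ind _ (fun _ => a)). rewrite Hs. ring.
Qed.

Lemma descent_contra n m p (df : Fin.t m -> vec n -> vec n) (g : Fin.t p -> vec n -> R)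
  (dg : Fin.t p -> vec n -> vec n) x t
  (hQP : QP_solution df g dg x t (vzero n)) (ht : t = Phi g x) (v : vec n)
  (Hj : forall j, 0 < Phi g x \/ dot (df j x) v < 0)
  (Hi : forall i, g i x = Phi g x -> dot (dg i x) v < 0) : False.
Proof.
  set (P := Phi g x) in *.
  assert (HP : 0 <= P) by apply vmax0_ge0.
  assert (Hg : forall i, g i x <= P) by (intro i; apply (vmax0_ge p (fun i => g i x))).
  destruct (fin_eps m (fun j c => 0 < P \/ dot (df j x) v <= - c)) as [c1 [Hc1 Hc1']].
  { intro j. destruct (Hj j) as [H|H].
    - exists 1. split; [lra|]. intros; left; auto.
    - exists (- dot (df j x) v). split; [lra|]. intros; right; lra. }
  destruct (fin_eps p (fun i c => g i x = P -> dot (dg i x) v <= - c)) as [c2 [Hc2 Hc2']].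
  { intro i. destruct (Req_EM_T (g i x) P) as [E|NE].
    - specialize (Hi i E). exists (- dot (dg i x) v). split; [lra|]. intros; lra.
    - exists 1. split; [lra|]. intros; contradiction. }
  pose proof (Rmin_l c1 c2). pose proof (Rmin_r c1 c2).
  assert (Hc0 : 0 < Rmin c1 c2) by (apply Rmin_pos; auto).
  set (c0 := Rmin c1 c2) in *.
  destruct (fin_eps m (fun j e => e * (dot (df j x) v + c0) <= P)) as [e1 [He1 He1']].
  { intro j. apply small_eps; [lra|].
    destruct (Hc1' j c0) as [H'|H']; [split; lra|right; auto|left; lra]. }
  destruct (fin_eps p (fun i e => e * (dot (dg i x) v + c0) <= P - g i x)) as [e2 [He2 He2']].
  { intro i. apply small_eps; [specialize (Hg i); lra|].
    destruct (Req_EM_T (g i x) P) as [E|NE].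
    - left. assert (Hcc : 0 < c0 <= c2) by lra. specialize (Hc2' i c0 Hcc E). cbv beta in Hc2'. lra.
    - right. specialize (Hg i). destruct Hg; [lra|contradiction]. }
  set (vv := dot v v). assert (Hvv : 0 <= vv) by apply dot_nonneg.
  set (e := Rmin (Rmin e1 e2) (c0 / (vv + 1))).
  assert (He : 0 < e).
  { apply Rmin_pos; [apply Rmin_pos; auto|]. apply Rdiv_lt_0_compat; lra. }
  assert (He_1 : e <= e1) by (unfold e; eapply Rle_trans; [apply Rmin_l|apply Rmin_l]).
  assert (He_2 : e <= e2) by (unfold e; eapply Rle_trans; [apply Rmin_l|apply Rmin_r]).
  assert (He_3 : e <= c0 / (vv + 1)) by (unfold e; apply Rmin_r).
  assert (Hev : e * vv < c0).
  { assert (c0 / (vv + 1) * (vv + 1) = c0) by (field; lra).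
    assert (e * (vv + 1) <= c0) by nra. nra. }
  destruct hQP as [_ Hopt].
  specialize (Hopt (P - e * c0) (vscal e v)).
  assert (Hf : QP_feasible df g dg x (P - e * c0) (vscal e v)).
  { split.
    - intro j. rewrite dot_scal_r. specialize (He1' j e (conj He He_1)). simpl in He1'. lra.
    - intro i. rewrite dot_scal_r. specialize (He2' i e (conj He He_2)). simpl in He2'. lra. }
  specialize (Hopt Hf). rewrite dot_zero_r in Hopt.
  rewrite dot_scal_l, dot_scal_r in Hopt. fold vv in Hopt.
  rewrite ht in Hopt. fold P in Hopt.
  assert (0 < e * (c0 - / 2 * (e * vv))) by (apply Rmult_lt_0_compat; lra).
  nra.
Qed.

Lemma vnorm_scal n a (u : vec n) : 0 <= a -> vnorm (vscal a u) = a * vnorm u.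
Proof.
  intro Ha. unfold vnorm. rewrite dot_scal_l, dot_scal_r.
  replace (a * (a * dot u u)) with ((a * a) * dot u u) by ring.
  rewrite sqrt_mult_alt by nra. rewrite sqrt_square; auto.
Qed.

Definition fin_of_le1 m : (1 <= m)%nat -> Fin.t m.
Proof. destruct m; intro H; [exfalso; lia| exact Fin.F1]. Defined.

Theorem mainTheorem2 (n m p : nat) (hm : (1 <= m)%nat)
  (f : Fin.t m -> vec n -> R) (df : Fin.t m -> vec n -> vec n)
  (g : Fin.t p -> vec n -> R) (dg : Fin.t p -> vec n -> vec n)
  (hf : forall j, is_C1 (f j) (df j))
  (hg : forall i, is_C1 (g i) (dg i))
  (x : vec n) (t : R) (d : vec n)
  (hQP : QP_solution df g dg x t d) :
  (* (I) *)
  t <= Phi g x - / 2 * dot d d /\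
  (* (II) *)
  (d = vzero n -> MFCQ g dg x -> strongly_critical df g dg x) /\
  (* (III) *)
  (d <> vzero n ->
   exists sbar : R, 0 < sbar /\
     forall sigma : R, sbar <= sigma -> forall j : Fin.t m,
       theta (df j) g dg sigma x d < 0 /\
       exists abar : R, 0 < abar /\
         forall alpha : R, 0 < alpha <= abar ->
           Psi (f j) g sigma (vadd x (vscal alpha d)) < Psi (f j) g sigma x).
Proof.
  assert (HPhi0 : 0 <= Phi g x) by apply vmax0_ge0.
  assert (Hgle : forall i, g i x <= Phi g x) by (intro i; apply (vmax0_ge p (fun i => g i x))).
  assert (HI : t <= Phi g x - / 2 * dot d d).
  { destruct hQP as [_ Hopt].
    assert (Hf : QP_feasible df g dg x (Phi g x) (vzero n)).
    { split; intro; rewrite dot_zero_r; [lra| specialize (Hgle i); lra]. }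
    specialize (Hopt _ _ Hf). rewrite dot_zero_r in Hopt. lra. }
  split; [exact HI|]. split.
  - intros Hd [z Hz]. subst d.
    rewrite dot_zero_r in HI.
    pose proof hQP as [[Hfj Hfi] _].
    assert (ht : t = Phi g x).
    { assert (Phi g x <= t); [|lra]. apply vmax0_le.
      - intro i. specialize (Hfi i). rewrite dot_zero_r in Hfi. lra.
      - specialize (Hfj (fin_of_le1 m hm)). rewrite dot_zero_r in Hfj. lra. }
    assert (HP0 : Phi g x = 0).
    { destruct HPhi0 as [Hlt|E]; [|auto]. exfalso.
      apply (descent_contra n m p df g dg x t hQP ht z);
        [intro; left; auto| intros i Hi; apply Hz; auto]. }
    set (actb := fun i => if Req_EM_T (g i x) (Phi g x) then true else false).
    set (Lf := map (fun j => df j x) (fin_list m) ++ map (fun i => dg i x) (filter actb (fin_list p))).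
    destruct (gordan n Lf) as [[v Hv]|[s [Hs Hc]]].
    + exfalso. apply (descent_contra n m p df g dg x t hQP ht v).
      * intro j. right. apply Hv. unfold Lf. apply in_or_app; left.
        apply (in_map (fun j => df j x)). apply fin_list_In.
      * intros i Hi. apply Hv. unfold Lf. apply in_or_app; right. apply (in_map (fun i => dg i x)).
        apply filter_In. split; [apply fin_list_In|]. unfold actb. destruct Req_EM_T; auto.
    + destruct (cone_to_mult n m p (fun j => df j x) (fun i => dg i x)
                  (fun i => g i x = Phi g x) Lf) with (w := vzero n) (s := s)
        as [lam [mu [Hl [Hm [Ha [Hw Hsum]]]]]]; auto.
      { intros c Hcin. unfold Lf in Hcin. apply in_app_or in Hcin as [H|H].
        - left. apply in_map_iff in H as [j [E _]]. eauto.
        - right. apply in_map_iff in H as [i [E Hi]]. apply filter_In in Hi as [_ Hi].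
          unfold actb in Hi. destruct Req_EM_T; [|discriminate]. eauto. }
      split.
      * intro i. specialize (Hgle i). lra.
      * exists lam, mu. split; [auto|]. split; [|split; [auto|split]].
        -- apply NNPP; intro Hn.
           assert (Hl0 : forall j, lam j = 0) by (intro j; apply NNPP; intro; apply Hn; eauto).
           assert (Hsl : vsum m lam = 0)
             by (rewrite (vsum_ext _ _ (fun _ => 0)); [apply vsum_zero|auto]).
           assert (Hmu : 0 < vsum p mu) by lra.
           destruct (vsum_pos_ex _ _ Hmu) as [i0 Hi0].
           assert (Hz0 : forall k, vsum p (fun i => mu i * dg i x k) = 0).
           { intro k. specialize (Hw k). unfold vzero in Hw.
             rewrite (vsum_ext _ (fun j => lam j * df j x k) (fun _ => 0)) in Hw
               by (intro j; rewrite Hl0; ring).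
             rewrite vsum_zero in Hw. lra. }
           assert (HS : vsum n (fun k => z k * vsum p (fun i => mu i * dg i x k)) = 0).
           { rewrite (vsum_ext _ _ (fun _ => 0)); [apply vsum_zero|]. intro k; rewrite Hz0; ring. }
           rewrite (vsum_ext _ _ (fun k => vsum p (fun i => z k * (mu i * dg i x k)))) in HS
             by (intro k; rewrite vsum_scal; reflexivity).
           rewrite vsum_swap in HS.
           rewrite (vsum_ext _ _ (fun i => mu i * dot (dg i x) z)) in HS.
           2: { intro i. unfold dot. rewrite <- vsum_scal. apply vsum_ext; intro; ring. }
           assert (vsum p (fun i => mu i * dot (dg i x) z) < 0); [|lra].
           apply (vsum_neg_strict _ _ i0).
           ++ intro i. destruct (Req_dec (mu i) 0) as [E|NE]; [rewrite E; lra|].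
              specialize (Hz i (Ha i NE)). specialize (Hm i). nra.
           ++ assert (mu i0 <> 0) by lra. specialize (Hz i0 (Ha i0 H)). nra.
        -- intro k. rewrite <- Hw. reflexivity.
        -- intro i. destruct (Req_dec (mu i) 0) as [E|NE]; [rewrite E; ring|].
           rewrite (Ha i NE), HP0. ring.
  - intro Hd.
    assert (Hdd : 0 < dot d d) by (apply dot_self_pos; auto).
    pose proof hQP as [[Hfj Hfi] _].
    assert (HM1 : t <= Rmax t 0) by apply Rmax_l.
    assert (HM2 : 0 <= Rmax t 0) by apply Rmax_r.
    set (M := Rmax t 0) in *.
    assert (HPS : PhiStar g dg x d <= M - Phi g x).
    { unfold PhiStar.
      assert (vmax0 p (fun i => if Req_EM_T (g i x) (Phi g x)
                                then g i x + dot (dg i x) d else 0) <= M); [|lra].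
      apply vmax0_le; auto. intro i. destruct Req_EM_T; [specialize (Hfi i); lra|lra]. }
    assert (Hq : 0 <= 2 * Rabs t / dot d d).
    { unfold Rdiv; apply Rmult_le_pos; [pose proof (Rabs_pos t); lra|].
      left; apply Rinv_0_lt_compat; auto. }
    exists (1 + 2 * Rabs t / dot d d). split; [lra|].
    intros sigma Hsig j.
    assert (Hs0 : 0 <= sigma) by lra.
    set (B := t + sigma * (M - Phi g x)).
    assert (HB : B < 0).
    { unfold B. destruct (Rle_dec 0 t) as [Ht|Ht].
      - assert (EM : M = t) by (unfold M; apply Rmax_left; lra). rewrite EM.
        rewrite Rabs_right in Hsig by lra.
        assert (2 * t / dot d d * dot d d = 2 * t) by (field; lra).
        assert (sigma * dot d d >= dot d d + 2 * t) by nra.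
        nra.
      - assert (EM : M = 0) by (unfold M; apply Rmax_right; lra). rewrite EM. nra. }
    split.
    + unfold theta. specialize (Hfj j).
      assert (sigma * PhiStar g dg x d <= sigma * (M - Phi g x)) by (apply Rmult_le_compat_l; auto).
      unfold B in HB. lra.
    + set (N := vnorm d). assert (HN : 0 <= N) by apply sqrt_pos.
      set (eps := - B / (2 * (1 + sigma) * (N + 1))).
      assert (Heps : 0 < eps) by (unfold eps; apply Rdiv_lt_0_compat; nra).
      assert (HK : (1 + sigma) * eps * (N + 1) = - B / 2) by (unfold eps; field; lra).
      destruct (hf j) as [Hgf _]. destruct (Hgf x eps Heps) as [df0 [Hdf0 Hdf0']].
      destruct (fin_eps p (fun i dl => forall h, vnorm h < dl ->
                  Rabs (g i (vadd x h) - g i x - dot (dg i x) h) <= eps * vnorm h))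
        as [dgl [Hdgl Hdgl']].
      { intro i. destruct (hg i) as [Hgg _]. destruct (Hgg x eps Heps) as [dl [Hdl Hdl']].
        exists dl. split; auto. intros e' He' h Hh. apply Hdl'. lra. }
      pose proof (Rmin_l df0 dgl). pose proof (Rmin_r df0 dgl).
      assert (Hdl : 0 < Rmin df0 dgl) by (apply Rmin_pos; auto).
      set (dl := Rmin df0 dgl) in *.
      exists (Rmin 1 (dl / (N + 1))). split.
      { apply Rmin_pos; [lra|apply Rdiv_lt_0_compat; lra]. }
      intros alpha [Ha1 Ha2].
      assert (Ha3 : alpha <= 1) by (eapply Rle_trans; [exact Ha2|apply Rmin_l]).
      assert (Ha4 : alpha <= dl / (N + 1)) by (eapply Rle_trans; [exact Ha2|apply Rmin_r]).
      assert (Hnh : vnorm (vscal alpha d) = alpha * N) by (unfold N; apply vnorm_scal; lra).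
      set (h := vscal alpha d) in *.
      assert (Hhd : alpha * N < dl).
      { assert (dl / (N + 1) * (N + 1) = dl) by (field; lra). nra. }
      assert (Hh1 : vnorm h < df0) by lra.
      assert (Hh2 : vnorm h < dgl) by lra.
      assert (Hfb : f j (vadd x h) <= f j x + alpha * dot (df j x) d + eps * (alpha * N)).
      { specialize (Hdf0' h Hh1). rewrite Hnh in Hdf0'. unfold h in Hdf0'.
        rewrite dot_scal_r in Hdf0'.
        pose proof (Rle_abs (f j (vadd x (vscal alpha d)) - f j x - alpha * dot (df j x) d)).
        unfold h. lra. }
      assert (Hpb : Phi g (vadd x h) <= (1 - alpha) * Phi g x + alpha * M + eps * (alpha * N)).
      { unfold Phi at 1. apply vmax0_le.
        - intro i. assert (Hdd' : 0 < dgl <= dgl) by lra.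
          specialize (Hdgl' i dgl Hdd' h Hh2). cbv beta in Hdgl'. rewrite Hnh in Hdgl'.
          unfold h in Hdgl' |- *. rewrite dot_scal_r in Hdgl'.
          pose proof (Rle_abs (g i (vadd x (vscal alpha d)) - g i x - alpha * dot (dg i x) d)).
          specialize (Hfi i). specialize (Hgle i).
          assert (g i x + alpha * dot (dg i x) d <= (1 - alpha) * Phi g x + alpha * M) by nra.
          lra.
        - assert (0 <= (1 - alpha) * Phi g x) by (apply Rmult_le_pos; lra).
          assert (0 <= eps * (alpha * N)) by (apply Rmult_le_pos; [lra|apply Rmult_le_pos; lra]).
          assert (0 <= alpha * M) by (apply Rmult_le_pos; lra).
          lra. }
      unfold Psi.
      assert (sigma * Phi g (vadd x h) <=
              sigma * ((1 - alpha) * Phi g x + alpha * M + eps * (alpha * N)))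
        by (apply Rmult_le_compat_l; auto).
      specialize (Hfj j).
      assert (alpha * dot (df j x) d <= alpha * t) by (apply Rmult_le_compat_l; lra).
      assert (HX : (1 + sigma) * eps * N <= - B / 2).
      { assert (0 < (1 + sigma) * eps) by (apply Rmult_lt_0_compat; lra). nra. }
      assert (alpha * ((1 + sigma) * eps * N) <= alpha * (- B / 2))
        by (apply Rmult_le_compat_l; lra).
      assert (alpha * B < 0) by nra.
      unfold B in *. lra.
Qed.
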